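(* Let $M=(X,rk)$ be a matroid on a finite ground set $X$ with rank $r=rk(X)$. Then for every integer $j$ with $j>f_2(M)-r$, \[[y^j]T_M(1,y)=\binom{|X|-j-1}{r-1}-\sum_{\substack{H\in \mathcal{H}(M),\\ |H|>f_2(M)}} \binom{|H|-j-1}{r-1}.\]
   Context: $T_M(x,y)=\sum_{A\subseteq X}(x-1)^{r-rk(A)}(y-1)^{|A|-rk(A)}$ is the Tutte polynomial of $M$, and $[y^j]f(y)$ denotes the coefficient of $y^j$ in $f$. The closure of $A\subseteq X$ is $cl_M(A)=\{e\in X: rk(A\cup\{e\})=rk(A)\}$; a flat is a set $F$ with $cl_M(F)=F$; a hyperplane is a flat of rank $r-1$, and $\mathcal{H}(M)$ is the set of all hyperplanes of $M$. For $k\ge 1$, $f_k(M)=\max\{|F|: F \text{ a flat of } M,\ rk(F)=r-k\}$. *)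

(* Defs.v *)
From mathcomp Require Import all_boot all_order all_algebra.
Set Implicit Arguments. Unset Strict Implicit. Unset Printing Implicit Defensive.
Import Order.TTheory GRing.Theory Num.Theory.

(* A matroid on the finite ground set X = [set: T], given by its rank function. *)
Definition is_matroid (T : finType) (rk : {set T} -> nat) : Prop :=
  [/\ forall A : {set T}, rk A <= #|A|,
      forall A B : {set T}, A \subset B -> rk A <= rk B
    & forall A B : {set T}, rk (A :|: B) + rk (A :&: B) <= rk A + rk B].

Section MatroidDefs.
Variables (T : finType) (rk : {set T} -> nat).

Definition mrank : nat := rk [set: T].

Definition closure (A : {set T}) : {set T} := [set e | rk (e |: A) == rk A].

Definition is_flat (F : {set T}) : bool := closure F == F.

Definition is_hyperplane (H : {set T}) : bool :=
  is_flat H && (rk H == mrank - 1).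

Definition fk (k : nat) : nat :=
  \max_(F : {set T} | is_flat F && (rk F == mrank - k)) #|F|.

(* The Tutte polynomial specialised at x (an integer), as a polynomial in y:
   T_M(x,y) = sum_A (x-1)^(r - rk A) (y-1)^(|A| - rk A). *)
Definition tutte_at_x (x : int) : {poly int} :=
  \sum_(A : {set T}) ((x - 1) ^+ (mrank - rk A))%:P * ('X - 1) ^+ (#|A| - rk A).

End MatroidDefs.

Definition coefz (p : {poly int}) (j : int) : int :=
  match j with Posz n => p`_n | Negz _ => 0 end.

(* Binomial coefficient with integer top: binom(n, k) = 0 for n < 0. *)
Definition binz (n : int) (k : nat) : int :=
  match n with Posz m => ('C(m, k))%:Z | Negz _ => 0 end.

(* Main.v *)
Require Import Defs.
From mathcomp Require Import all_boot all_order all_algebra zify.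
Import Order.TTheory GRing.Theory Num.Theory.
Set Implicit Arguments. Unset Strict Implicit. Unset Printing Implicit Defensive.

Lemma rk_card (T : finType) (rk : {set T} -> nat) : is_matroid rk ->
  forall A, rk A <= #|A|.
Proof. by case. Qed.

Lemma rk_mono (T : finType) (rk : {set T} -> nat) : is_matroid rk ->
  forall A B : {set T}, A \subset B -> rk A <= rk B.
Proof. by case. Qed.

Lemma rk_sub (T : finType) (rk : {set T} -> nat) : is_matroid rk ->
  forall A B : {set T}, rk (A :|: B) + rk (A :&: B) <= rk A + rk B.
Proof. by case. Qed.

Lemma rk_r (T : finType) (rk : {set T} -> nat) : is_matroid rk ->
  forall A, rk A <= mrank rk.
Proof. by move=> hM A; exact: (rk_mono hM (subsetT A)). Qed.

Lemma rkU1 (T : finType) (rk : {set T} -> nat) : is_matroid rk ->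
  forall e A, rk (e |: A) <= (rk A).+1.
Proof.
move=> hM e A; have := rk_sub hM [set e] A; have := rk_card hM [set e].
rewrite cards1; lia.
Qed.

Lemma extend (T : finType) (rk : {set T} -> nat) : is_matroid rk ->
  forall (A : {set T}) t, rk A <= t -> t <= mrank rk ->
  exists F : {set T}, [/\ A \subset F, is_flat rk F & rk F = t].
Proof.
move=> hM A t hA ht.
have PA : (A \subset A) && (rk A <= t) by rewrite subxx hA.
case: (@arg_maxnP _ A (fun F : {set T} => (A \subset F) && (rk F <= t)) (fun F : {set T} => #|F|) PA) => F /andP[sAF rkF] maxF.
have grow : forall e, e \notin F -> t < rk (e |: F).
  move=> e eF; rewrite ltnNge; apply/negP => h.
  have := maxF (e |: F); rewrite (subset_trans sAF (subsetUr _ _)) h => /(_ isT).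
  by rewrite cardsU1 eF add1n /= ltnn.
exists F; split => //.
  rewrite /is_flat /Defs.closure; apply/eqP/setP => e; rewrite inE.
  case: (boolP (e \in F)) => eF.
    have -> : e |: F = F by apply/setUidPr; rewrite sub1set.
    by rewrite eqxx.
  have := grow e eF; move: rkF; case: eqP => //; lia.
apply/eqP; rewrite eqn_leq rkF /= leqNgt; apply/negP => lt.
have : ~~ ([set: T] \subset F).
  apply/negP => sTF; have : F = [set: T] by apply/eqP; rewrite eqEsubset subsetT.
  move=> FT; move: lt ht; rewrite FT /mrank; lia.
case/subsetPn => e _ eF.
have := grow e eF; have := rkU1 hM e F; lia.
Qed.

Lemma hyp_add (T : finType) (rk : {set T} -> nat) : is_matroid rk ->
  forall (H : {set T}) e, is_hyperplane rk H -> e \notin H -> rk (e |: H) = mrank rk.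
Proof.
move=> hM H e /andP[/eqP fH /eqP rH] eH.
have : e \notin Defs.closure rk H by rewrite fH.
rewrite inE => ne.
have := rk_r hM (e |: H); have := rk_mono hM (subsetUr [set e] H).
move: ne; rewrite rH; case: eqP => //; lia.
Qed.

Lemma two_hyp (T : finType) (rk : {set T} -> nat) : is_matroid rk ->
  2 <= mrank rk ->
  forall H1 H2 A : {set T}, is_hyperplane rk H1 -> is_hyperplane rk H2 -> H1 != H2 ->
  A \subset H1 -> A \subset H2 -> #|A| <= fk rk 2.
Proof.
move=> hM r2 H1 H2 A h1 h2 neq s1 s2.
have key : forall (G1 G2 : {set T}) e, is_hyperplane rk G1 -> is_hyperplane rk G2 ->
    e \in G2 -> e \notin G1 -> rk (G1 :&: G2) <= mrank rk - 2.
  move=> G1 G2 e g1 g2 eG2 eG1.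
  have := hyp_add hM g1 eG1.
  have : e |: G1 \subset G1 :|: G2.
    by rewrite subUset subsetUl andbT sub1set inE eG2 orbT.
  move=> /(rk_mono hM) => le1 eq1.
  have := rk_sub hM G1 G2.
  move: g1 g2 => /andP[_ /eqP r1] /andP[_ /eqP r2'].
  lia.
have hI : rk (H1 :&: H2) <= mrank rk - 2.
  move: neq; rewrite eqEsubset negb_and => /orP[] /subsetPn [e eH1 eH2].
    by rewrite setIC; apply: (key H2 H1 e).
  by apply: (key H1 H2 e).
have [F [sF fF rF]] := extend hM hI (leq_subr _ _).
apply: (leq_trans (subset_leq_card (_ : A \subset H1 :&: H2))).
  by rewrite subsetI s1 s2.
apply: (leq_trans (subset_leq_card sF)).
by apply: leq_bigmax_cond; rewrite fF rF eqxx.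
Qed.

Lemma exists_hyp (T : finType) (rk : {set T} -> nat) : is_matroid rk ->
  1 <= mrank rk -> forall A : {set T}, rk A < mrank rk ->
  exists H : {set T}, is_hyperplane rk H && (A \subset H).
Proof.
move=> hM r1 A hA.
have [|F [sF fF rF]] := extend hM (t := mrank rk - 1) (A := A) _ (leq_subr _ _).
  lia.
by exists F; rewrite /is_hyperplane fF rF eqxx sF.
Qed.

Lemma fk2_ge (T : finType) (rk : {set T} -> nat) : is_matroid rk ->
  mrank rk - 2 <= fk rk 2.
Proof.
move=> hM.
have h0 : rk set0 <= mrank rk - 2 by have := rk_card hM set0; rewrite cards0; lia.
have [F [_ fF rF]] := extend hM h0 (leq_subr _ _).
rewrite -rF; apply: (leq_trans (rk_card hM F)).
by apply: leq_bigmax_cond; rewrite fF rF eqxx.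
Qed.

Local Open Scope ring_scope.

Definition wp (r k : nat) : {poly int} := if (r <= k)%N then ('X - 1) ^+ (k - r) else 0.
Definition Qp (r m : nat) : {poly int} := \sum_(k < m.+1) wp r k *+ 'C(m, k).

Lemma Qp0 m : Qp 0 m = 'X^m.
Proof.
rewrite /Qp -(subrK 1 'X) exprD1n.
by apply: eq_bigr => k _; rewrite /wp subn0.
Qed.

Lemma QpS r m : Qp r.+1 m.+1 = Qp r.+1 m + Qp r m.
Proof.
rewrite /Qp big_ord_recl /= {1}/wp /= mul0rn add0r.
rewrite (eq_bigr (fun k : 'I_m.+1 => wp r.+1 k.+1 *+ 'C(m, k.+1) + wp r k *+ 'C(m, k))); last first.
  by move=> k _; rewrite /bump /= binS mulrnDr /wp ltnS subSS.
rewrite big_split /=; congr (_ + _).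
rewrite [in RHS]big_ord_recl /= {2}/wp /= mul0rn add0r.
rewrite [LHS]big_ord_recr /= bin_small // mulr0n addr0.
by apply: eq_bigr => i _; rewrite /bump add1n.
Qed.

Lemma Qp0m r : Qp r.+1 0 = 0.
Proof. by rewrite /Qp big_ord1 /wp /= mul0rn. Qed.

Lemma coefQp r m n : (Qp r.+1 m)`_n = (if (n < m)%N then 'C(m - n.+1, r) else 0%N)%:R.
Proof.
elim: r m n => [|r IH] m n.
  elim: m n => [|m IHm] n; first by rewrite Qp0m coef0.
  rewrite QpS coefD IHm Qp0 coefXn !bin0.
  case: (ltngtP n m) => h.
  - by rewrite ltnS (ltnW h) addr0.
  - by rewrite ltnNge h addr0.
  - by rewrite h ltnSn add0r.
elim: m n => [|m IHm] n; first by rewrite Qp0m coef0.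
rewrite QpS coefD IHm IH.
case: (ltngtP n m) => h.
- by rewrite ltnS (ltnW h) -natrD subSn // binS.
- by rewrite ltnNge h addr0.
- by rewrite h ltnSn subnn bin0n addr0.
Qed.

Lemma sum_subsets (T : finType) (B : {set T}) r :
  \sum_(A : {set T} | A \subset B) wp r #|A| = Qp r #|B|.
Proof.
have step : forall A : {set T}, A \subset B ->
   wp r #|A| = \sum_(k < #|B|.+1) (if #|A| == k then wp r k else 0).
  move=> A sAB; rewrite -big_mkcond /= (big_pred1 (inord #|A|)).
    by rewrite inordK // ltnS subset_leq_card.
  move=> k /=; rewrite -(inj_eq val_inj) /= inordK ?ltnS ?subset_leq_card //.
rewrite (eq_bigr _ step) exchange_big /Qp; apply: eq_bigr => k _.
rewrite -big_mkcondr /= -cards_draws -sumr_const.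
by apply: eq_bigl => A; rewrite inE.
Qed.

Lemma decomp (T : finType) (rk : {set T} -> nat) : is_matroid rk ->
  (2 <= mrank rk)%N -> forall (c : {set T} -> int),
  (forall A : {set T}, (#|A| <= fk rk 2)%N -> c A = 0) ->
  \sum_(A : {set T}) (rk A == mrank rk)%:R * c A =
  \sum_(A : {set T}) c A - \sum_(H : {set T} | is_hyperplane rk H) \sum_(A : {set T} | A \subset H) c A.
Proof.
move=> hM r2 c hc.
have -> : \sum_(H : {set T} | is_hyperplane rk H) \sum_(A : {set T} | A \subset H) c A =
          \sum_(A : {set T}) \sum_(H | is_hyperplane rk H && (A \subset H)) c A.
  rewrite (eq_bigr (fun H : {set T} => \sum_(A : {set T}) (if A \subset H then c A else 0))); last first.
    by move=> H _; rewrite big_mkcond.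
  by rewrite exchange_big; apply: eq_bigr => A _; rewrite [RHS]big_mkcondr.
rewrite -sumrB; apply: eq_bigr => A _.
case: (leqP #|A| (fk rk 2)) => hA.
  by rewrite hc // mulr0 big1 ?subrr // => H _; exact: hc.
case: (eqVneq (rk A) (mrank rk)) => hr.
  rewrite big_pred0 ?mul1r ?subr0 // => H.
  apply/negbTE/negP => /andP[/andP[_ /eqP rH] sAH].
  have := rk_mono hM sAH; rewrite rH hr; lia.
have hlt : (rk A < mrank rk)%N by rewrite ltn_neqAle hr rk_r.
have [|H0 /andP[h0 s0]] := exists_hyp hM _ hlt; first lia.
rewrite (big_pred1 H0) ?mul0r ?subrr //.
move=> H /=; case: (eqVneq H H0) => [->|ne]; first by rewrite h0 s0.
apply/negbTE/negP => /andP[hH sH]; have := two_hyp hM r2 hH h0 ne sH s0; lia.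
Qed.

Lemma sum_draws (T : finType) (B : {set T}) k :
  \sum_(A : {set T} | A \subset B) (#|A| == k)%:R = ('C(#|B|, k))%:R :> int.
Proof.
rewrite -cards_draws (eq_bigr (fun A : {set T} => if #|A| == k then 1 else 0)); last first.
  by move=> A _; case: eqP.
rewrite -big_mkcondr sumr_const; congr (_ *+ _).
by apply: eq_card => A; rewrite inE.
Qed.

Lemma binzE (m n k : nat) :
  binz (m%:Z - n%:Z - 1) k = (if (n < m)%N then 'C(m - n.+1, k) else 0%N)%:Z.
Proof.
case: ltnP => h.
  have -> : m%:Z - n%:Z - 1 = (m - n.+1)%N%:Z by lia.
  by [].
have : m%:Z - n%:Z - 1 < 0 by lia.
by case: (m%:Z - n%:Z - 1).
Qed.

Lemma sum_all (T : finType) (F : {set T} -> int) :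
  \sum_(A : {set T}) F A = \sum_(A : {set T} | A \subset setT) F A.
Proof. by apply: eq_bigl => A; rewrite subsetT. Qed.

Unset Implicit Arguments.

Theorem theorem3p2 (T : finType) (rk : {set T} -> nat) :
  is_matroid rk ->
  (2 <= mrank rk)%N ->
  forall j : int,
    (fk rk 2)%:Z - (mrank rk)%:Z < j ->
    coefz (tutte_at_x rk 1) j =
      binz (#|T|%:Z - j - 1) (mrank rk).-1 -
      \sum_(H : {set T} | is_hyperplane rk H && (fk rk 2 < #|H|)%N)
         binz (#|H|%:Z - j - 1) (mrank rk).-1.
Proof.
move=> hM r2 j hj.
have f2 := fk2_ge hM.
case: j hj => n hn; last first.
  have n0 : n = 0%N by lia.
  have f2e : fk rk 2 = (mrank rk - 2)%N by lia.
  rewrite n0.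
  have e1 : forall m : nat, m%:Z - Negz 0 - 1 = m%:Z by move=> m; lia.
  rewrite /= e1.
  under eq_bigr do rewrite e1.
  have hc : forall A : {set T}, (#|A| <= fk rk 2)%N ->
      (fun A : {set T} => ((#|A| == (mrank rk).-1)%:R : int)) A = 0.
    by move=> A hA; rewrite /=; case: eqP => // eA; move: hA; rewrite eA f2e; lia.
  have := decomp hM r2 hc.
  rewrite big1; last first.
    move=> A _; case: eqP => [eA|]; last by rewrite mul0r.
    case: eqP => [cA|]; last by rewrite mulr0.
    by have := rk_card hM A; rewrite eA cA; lia.
  rewrite sum_all sum_draws cardsT => h; rewrite [LHS]h; congr (_ - _); first by rewrite natz.
  rewrite [RHS]big_mkcondr /=; apply: eq_bigr => H _.
  rewrite sum_draws natz; case: ltnP => // hH.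
  by rewrite bin_small //; lia.
have hnr : (fk rk 2 < n + mrank rk)%N by lia.
set r := mrank rk.
have rS : r = (r.-1).+1 by rewrite /r; lia.
have -> : coefz (tutte_at_x rk 1) n =
    \sum_(A : {set T}) (rk A == r)%:R * (wp r #|A|)`_n.
  rewrite /= /tutte_at_x coef_sum; apply: eq_bigr => A _.
  rewrite coefCM subrr expr0n /= -/r.
  have hle : (rk A <= r)%N by exact: rk_r.
  rewrite subn_eq0; case: (eqVneq (rk A) r) => [rA|ne].
    have hc : (r <= #|A|)%N by rewrite -rA rk_card.
    by rewrite rA leqnn /wp hc.
  have -> : (r <= rk A)%N = false by apply/negbTE; rewrite -ltnNge ltn_neqAle ne.
  by rewrite !mul0r.
rewrite decomp //; last first.
  move=> A hA; rewrite /wp; case: ifP => hrA; last by rewrite coef0.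
  apply: nth_default.
  rewrite -polyC1 size_exp_XsubC; lia.
rewrite sum_all -coef_sum sum_subsets cardsT rS coefQp -rS binzE.
congr (_ - _); first by rewrite natz.
rewrite [RHS]big_mkcondr /=; apply: eq_bigr => H _.
rewrite -coef_sum sum_subsets rS coefQp -rS binzE.
case: ltnP => ?; case: ltnP => ?; rewrite ?natz //.
rewrite bin_small // /r; lia.
Qed.
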